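(* Let $\theta\in(0,1)$ and let $P_\theta$ be the geometric distribution $p_\theta(i)=(1-\theta)\theta^i$, $i\ge0$. Then the Golomb code $\mathrm{G}k$ with $k=\lceil -1/\log_2\theta\rceil$ minimizes the maximal pointwise redundancy $R^*(N,P_\theta)=\sup_{i\ge0}\,[n(i)+\log_2 p_\theta(i)]$ over all binary prefix codes for the nonnegative integers.
   Context: A binary prefix code for the nonnegative integers assigns to each $i\ge 0$ a codeword $c(i)\in\{0,1\}^*$ such that no codeword is a prefix of another; $n(i)$ is the length of $c(i)$ and $N=\{n(i)\}$. For an integer $k\ge1$, let $b(x,k)$ ($0\le x<k$) be the $(x+1)$th codeword of the complete alphabetic binary code on $k$ items, in which the first $2^{\lceil\log_2k\rceil}-k$ items have length $\lfloor\log_2k\rfloor$ and the remaining $2k-2^{\lceil\log_2k\rceil}$ have length $\lceil\log_2k\rceil$ (empty string if $k=1$). The Golomb code $\mathrm{G}k$ assigns to $j\ge0$ the codeword $1^{\lfloor j/k\rfloor}\,0\,b(j\bmod k,k)$. *)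

(* Defs.v *)
From HB Require Import structures.
From mathcomp Require Import all_boot all_order all_algebra.
From mathcomp Require Import all_classical all_reals all_analysis.
Set Implicit Arguments. Unset Strict Implicit. Unset Printing Implicit Defensive.
Import Order.TTheory GRing.Theory Num.Theory.

Definition nat_code := nat -> seq bool.

(* Prefix code: no codeword is a prefix of a different codeword
   (since every word is a prefix of itself, this also forces injectivity). *)
Definition prefix_code (c : nat_code) : Prop :=
  forall i j : nat, i <> j -> ~~ prefix (c i) (c j).

(* The m-bit big-endian binary representation of n (n < 2^m). *)
Definition bin (m n : nat) : seq bool :=
  [seq odd (n %/ 2 ^ (m - i.+1)) | i <- iota 0 m].

(* b(x,k): (x+1)-th codeword of the complete alphabetic binary code on k items.
   With L = ceil(log2 k) and u = 2^L - k, the first u items get the words of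
   length L-1 = floor(log2 k) (in lexicographic order), the remaining ones
   get the words of length L after them. For k = 1 this is the empty word. *)
Definition bcode (x k : nat) : seq bool :=
  let L := up_log 2 k in
  let u := 2 ^ L - k in
  if x < u then bin L.-1 x else bin L (x + u).

Definition golomb (k : nat) : nat_code :=
  fun j => nseq (j %/ k) true ++ false :: bcode (j %% k) k.

Local Open Scope ring_scope.

Definition log2 {R : realType} (x : R) : R := ln x / ln 2.

Definition geom_p {R : realType} (theta : R) (i : nat) : R :=
  (1 - theta) * theta ^+ i.

Definition max_pt_red {R : realType} (c : nat_code) (p : nat -> R) : \bar R :=
  ereal_sup [set ((size (c i))%:R + log2 (p i))%:E | i in [set: nat]]%classic.

(* Main.v *)
Require Import Defs.
From HB Require Import structures.
From mathcomp Require Import all_boot all_order all_algebra.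
From mathcomp Require Import all_classical all_reals all_analysis.
From mathcomp Require Import zify ring lra.
Import Order.TTheory GRing.Theory Num.Theory.


Definition pfree (W : seq (seq bool)) :=
  {in W &, forall w1 w2, w1 != w2 -> ~~ prefix w1 w2}.

Definition pickb (b : bool) (w : seq bool) : bool :=
  if w is x :: _ then x == b else false.

Lemma sum_const_seq (W : seq (seq bool)) (c : nat) :
  \sum_(w <- W) c = size W * c.
Proof. by rewrite big_const_seq count_predT iter_addn_0 mulnC. Qed.

Lemma kraft_half D (IH : forall W : seq (seq bool), uniq W -> pfree W ->
  all (fun w => size w <= D) W -> \sum_(w <- W) 2 ^ (D - size w) <= 2 ^ D)
  (W : seq (seq bool)) b : uniq W -> pfree W -> all (fun w => size w <= D.+1) W ->
  \sum_(w <- W | pickb b w) 2 ^ (D.+1 - size w) <= 2 ^ D.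
Proof.
move=> uW pW aW; rewrite -big_filter.
set V := seq.filter (pickb b) W.
have hV : forall w, w \in V -> w = b :: behead w.
  by move=> w; rewrite mem_filter; case: w => //= x w /andP[/eqP -> _].
have -> : \sum_(w <- V) 2 ^ (D.+1 - size w) = \sum_(v <- map behead V) 2 ^ (D - size v).
  rewrite big_map; apply: eq_big_seq => w /hV ->; by rewrite /= subSS.
apply: IH.
- rewrite map_inj_in_uniq; first by rewrite filter_uniq.
  by move=> w1 w2 /hV h1 /hV h2 e; rewrite h1 h2 e.
- move=> v1 v2 /mapP[w1 i1 ->] /mapP[w2 i2 ->] ne.
  have := hV _ i1; have := hV _ i2; move: i1 i2; rewrite !mem_filter.
  move=> /andP[_ j1] /andP[_ j2] h2 h1.
  have : w1 != w2 by apply: contraNneq ne => ->.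
  move=> /(pW _ _ j1 j2).
  by rewrite h1 h2 /= eqxx.
- apply/allP => v /mapP[w i ->]; move: i; rewrite mem_filter => /andP[_ /(allP aW)].
  by case: w => //=.
Qed.

Lemma kraft D : forall W : seq (seq bool), uniq W -> pfree W ->
  all (fun w => size w <= D) W -> \sum_(w <- W) 2 ^ (D - size w) <= 2 ^ D.
Proof.
elim: D => [|D IH] W uW pW aW.
all: case: (boolP ([::] \in W)) => hn.
- have E : forall w, w \in W -> w = [::].
    move=> w hw; apply/eqP; apply: contraTT (prefix0s w) => ne.
    by apply: pW => //; rewrite eq_sym.
  rewrite (eq_big_seq (fun _ => 2 ^ 0)); last by move=> w /E ->.
  rewrite sum_const_seq.
  have : size W <= size [:: ([::] : seq bool)].
    by apply: uniq_leq_size => // w /E ->; rewrite inE.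
  by case: (size W) => [|[|]].
- case: W hn aW {uW pW} => [|w W] //=; first by rewrite big_nil.
  by rewrite inE negb_or => /andP[ne _] /andP[]; case: w ne.
- have E : forall w, w \in W -> w = [::].
    move=> w hw; apply/eqP; apply: contraTT (prefix0s w) => ne.
    by apply: pW => //; rewrite eq_sym.
  rewrite (eq_big_seq (fun _ => 2 ^ D.+1)); last by move=> w /E ->.
  rewrite sum_const_seq.
  have : size W <= size [:: ([::] : seq bool)].
    by apply: uniq_leq_size => // w /E ->; rewrite inE.
  by case: (size W) => [|[|]] //= _; rewrite mul1n.
- rewrite (bigID (pickb false)) /=.
  have -> : \sum_(w <- W | ~~ pickb false w) 2 ^ (D.+1 - size w) =
            \sum_(w <- W | pickb true w) 2 ^ (D.+1 - size w).
    rewrite big_seq_cond [RHS]big_seq_cond; apply: eq_bigl => w.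
    case: (boolP (w \in W)) => //= hw.
    case: w hw => [|x w] hw; first by rewrite hw in hn.
    by case: x {hw}.
  rewrite expnS mul2n -addnn.
  by apply: leq_add; apply: kraft_half.
Qed.



Lemma kraft_code (c : nat -> seq bool) (pc : forall i j, i <> j -> ~~ prefix (c i) (c j)) M D : (forall i, i < M -> size (c i) <= D) ->
  \sum_(0 <= i < M) 2 ^ (D - size (c i)) <= 2 ^ D.
Proof.
move=> hM.
have inj : {in index_iota 0 M &, injective c}.
  move=> i j _ _ e; apply/eqP/negPn/negP => /eqP ne.
  by have := pc _ _ ne; rewrite e prefix_refl.
rewrite -(big_map c xpredT (fun w => 2 ^ (D - size w))).
apply: kraft.
- by rewrite map_inj_in_uniq // iota_uniq.
- move=> w1 w2 /mapP[i _ ->] /mapP[j _ ->] ne; apply: pc => e.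
  by rewrite e eqxx in ne.
- apply/allP => w /mapP[i]; rewrite mem_iota => /andP[_ hi] ->; apply: hM.
  by move: hi; rewrite add0n subn0.
Qed.

Lemma sum_ge1 (c : nat -> seq bool) (pc : forall i j, i <> j -> ~~ prefix (c i) (c j)) m n D : (forall i, m <= i < n -> size (c i) <= D) ->
  n - m <= \sum_(m <= i < n) 2 ^ (D - size (c i)).
Proof.
move=> h; rewrite -{1}(muln1 (n - m)) -sum_nat_const_nat big_nat_cond [X in _ <= X]big_nat_cond.
by apply: leq_sum => i /andP[hi _]; rewrite expn_gt0.
Qed.

Lemma nocode (c : nat -> seq bool) (pc : forall i j, i <> j -> ~~ prefix (c i) (c j)) (L u K q0 : nat) (hk : u + K + 1 = 2 ^ L)
  (H : forall q i, i <= u + q * K -> size (c i) <= L + q)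
  (Hb : forall i, i <= u + q0 * K + 1 -> size (c i) <= L + q0) : False.
Proof.
case: (posnP K) => [K0|Kpos].
  subst K.
  have := @kraft_code c pc u.+2 (L + q0).
  have : (forall i, i < u.+2 -> size (c i) <= L + q0).
    move=> i hi; case: (ltnP i u.+1) => hi2.
      by apply: leq_trans (H 0 i _) _; lia.
    by apply: Hb; lia.
  move=> h /(_ h); rewrite big_nat_recr //=.
  have h1 : \sum_(0 <= i < u.+1) 2 ^ q0 <= \sum_(0 <= i < u.+1) 2 ^ (L + q0 - size (c i)).
    rewrite big_nat_cond [X in _ <= X]big_nat_cond.
    apply: leq_sum => i /andP[/andP[_ hi] _]; apply: leq_pexp2l => //.
    have := H 0 i; lia.
  rewrite sum_nat_const_nat subn0 in h1.
  have h2 : 0 < 2 ^ (L + q0 - size (c u.+1)) by rewrite expn_gt0.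
  rewrite addn0 in hk.
  have : (u + 1) * 2 ^ q0 = 2 ^ (L + q0) by rewrite hk expnD.
  lia.
pose T Q := \sum_(0 <= i < u + Q * K + 1) 2 ^ (L + Q - size (c i)).
have claim : forall Q, 2 ^ (L + Q) + (if q0 < Q then 2 ^ (Q - q0 - 1) else 0) <= T Q + K.
  elim=> [|Q IH].
    rewrite /T mul0n !addn0 -hk.
    have h := @sum_ge1 c pc 0 (u + 1) L.
    suff hh : forall i, 0 <= i < u + 1 -> size (c i) <= L.
      by have := h hh; rewrite subn0; lia.
    move=> i hi; have := H 0 i; lia.
  rewrite /T (@big_cat_nat _ _ _ (u + Q * K + 1)) /=; [|lia|lia].
  have -> : \sum_(0 <= i < u + Q * K + 1) 2 ^ (L + Q.+1 - size (c i)) = 2 * T Q.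
    rewrite /T big_distrr /=; apply: eq_big_nat => i hi.
    have := H Q i; rewrite -expnS; move=> hh; congr (2 ^ _); lia.
  have hB : K + (Q == q0) <= \sum_(u + Q * K + 1 <= i < u + Q.+1 * K + 1) 2 ^ (L + Q.+1 - size (c i)).
    rewrite big_ltn; last by lia.
    have := @sum_ge1 c pc (u + Q * K + 1).+1 (u + Q.+1 * K + 1) (L + Q.+1).
    move=> /(_ _) hr.
    have hr' : K - 1 <= \sum_((u + Q * K + 1).+1 <= i < u + Q.+1 * K + 1) 2 ^ (L + Q.+1 - size (c i)).
      apply: leq_trans (hr _); first by rewrite mulSn; lia.
      move=> i hi; apply: leq_trans (H Q.+1 i _) _ => //; rewrite mulSn; lia.
    have hf : 1 + (Q == q0) <= 2 ^ (L + Q.+1 - size (c (u + Q * K + 1))).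
      case: eqP => [eQ|_].
        subst Q; have := Hb (u + q0 * K + 1) (leqnn _) => hs.
        rewrite (_ : L + q0.+1 - _ = (L + q0 - size (c (u + q0 * K + 1))).+1); last by lia.
        by rewrite expnS; have := expn_gt0 2 (L + q0 - size (c (u + q0 * K + 1))); lia.
      by rewrite expn_gt0.
    lia.
  move: IH; rewrite (addnS L Q) expnS; rewrite (addnS L Q) in hB.
  case: (ltngtP q0 Q) => hq.
  - have -> : q0 < Q.+1 by lia.
    rewrite (_ : Q.+1 - q0 - 1 = (Q - q0 - 1).+1); last by lia.
    rewrite expnS; have : (Q == q0) = false by apply/negbTE/eqP; lia.
    move=> e; rewrite e in hB; lia.
  - have -> : (q0 < Q.+1) = false by apply/negbTE; lia.
    have : (Q == q0) = false by apply/negbTE/eqP; lia.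
    move=> e; rewrite e in hB; lia.
  - subst Q; rewrite ltnSn (_ : q0.+1 - q0 - 1 = 0); last by rewrite subSnn.
    rewrite eqxx in hB; clearbody T; move: (T q0) (2 ^ (L + q0)) hB => a b hB; rewrite expn0; lia.

have key : forall Q, q0 < Q -> K < 2 ^ (Q - q0 - 1) -> False.
  move=> Q hQ hK.
  have := claim Q; rewrite hQ.
  have hk2 : T Q <= 2 ^ (L + Q).
    rewrite /T; apply: (@kraft_code c pc) => i hi; apply: H; move: hi; rewrite addn1 ltnS; exact.
  clearbody T; move: (T Q) (2 ^ (L + Q)) (2 ^ (Q - q0 - 1)) hK hk2 => a b d; lia.
apply: (key (q0 + 1 + K)); first by lia.
have -> : q0 + 1 + K - q0 - 1 = K by rewrite -addnA addKn addKn.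
by apply: ltn_expl.
Qed.

Lemma size_bin m n : size (bin m n) = m.
Proof. by rewrite size_map size_iota. Qed.

Lemma bin_rcons m y : bin m.+1 y = rcons (bin m y./2) (odd y).
Proof.
rewrite /bin -[m.+1]addn1 iotaD add0n map_cat cats1 /= (_ : m + 1 - m.+1 = 0) ?expn0 ?divn1; last by rewrite addn1 subnn.
congr rcons.
apply/eq_in_map => i; rewrite mem_iota add0n => /andP[_ hi].
rewrite (_ : m + 1 - i.+1 = (m - i.+1).+1); last by lia.
by rewrite expnS divnMA divn2.
Qed.

Lemma bin_inj m x y : x < 2 ^ m -> y < 2 ^ m -> bin m x = bin m y -> x = y.
Proof.
elim: m x y => [|m IH] x y.
  by rewrite expn0; case: x => //; case: y.
rewrite !bin_rcons => hx hy /rcons_inj [/IH e eo].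
rewrite -(odd_double_half x) -(odd_double_half y) eo e //.
- move: hx; rewrite expnS; lia.
- move: hy; rewrite expnS; lia.
Qed.

Lemma prefix_same_size (s t : seq bool) : size s = size t -> prefix s t -> s = t.
Proof. by move=> e; rewrite prefixE e take_size => /eqP. Qed.

Lemma prefix_rcons_same (s t : seq bool) z : size s = size t -> prefix s (rcons t z) -> s = t.
Proof. by move=> e; rewrite prefixE e -cats1 take_size_cat // => /eqP. Qed.

Lemma bcode_pf k x y : 0 < k -> x < k -> y < k -> x <> y ->
  ~~ prefix (bcode x k) (bcode y k).
Proof.
move=> k0 xk yk ne; rewrite /bcode.
have kL : k <= 2 ^ up_log 2 k by apply: up_logP.
have uL : 0 < 2 ^ up_log 2 k - k -> 0 < up_log 2 k /\ 2 ^ up_log 2 k = 2 * 2 ^ (up_log 2 k).-1 /\ 2 ^ (up_log 2 k).-1 < k.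
  move=> u0; have k1 : 1 < k.
    rewrite ltnNge; apply/negP => k1; have ek : k = 1 by lia.
    by move: u0; rewrite ek up_log1.
  have := up_log_gtn (leqnn 2) k1.
  case: (up_log 2 k) kL => [|L] /=; first by rewrite expn0; lia.
  by rewrite expnS.
move: (up_log 2 k) kL uL => L kL uL.
have hu : exists u, u = 2 ^ L - k by exists (2 ^ L - k).
case: hu => u hu; rewrite -hu; rewrite -hu in uL.
have uL0 : 0 < u -> 0 < L /\ u <= 2 ^ L.-1.
  by move=> /uL [L0 [e h]]; split => //; lia.
clear uL; rename uL0 into uL.
case: ltnP => hx; case: ltnP => hy; apply/negP => hp.
- have [L0 uL'] := uL (leq_ltn_trans (leq0n _) hx).
  move: hp => /prefix_same_size; rewrite !size_bin => /(_ erefl) /bin_inj.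
  by move=> /(_ (leq_trans hx uL') (leq_trans hy uL')).
- have [L0 uL'] := uL (leq_ltn_trans (leq0n _) hx).
  case: L kL L0 uL' hp hu uL => [|L] // kL _ uL' hp hu _; rewrite bin_rcons in hp.
  move: hp => /prefix_rcons_same; rewrite !size_bin => /(_ erefl) /bin_inj.
  have h1 : x < 2 ^ L by apply: leq_trans hx uL'.
  have h2 : (y + u)./2 < 2 ^ L.
    move: kL hu; rewrite !expnS; lia.
  move=> /(_ h1 h2); lia.
- have [L0 uL'] := uL (leq_ltn_trans (leq0n _) hy).
  have := size_prefix hp; rewrite !size_bin; lia.
- move: hp => /prefix_same_size; rewrite !size_bin => /(_ erefl) /bin_inj.
  have h1 : x + u < 2 ^ L by lia.
  have h2 : y + u < 2 ^ L by lia.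
  move=> /(_ h1 h2); lia.
Qed.

Lemma prefix_unary a b (s t : seq bool) :
  prefix (nseq a true ++ false :: s) (nseq b true ++ false :: t) = (a == b) && prefix s t.
Proof.
elim: a b => [|a IH] [|b] //=; by rewrite IH.
Qed.

Lemma golomb_pf k : 0 < k -> forall i j, i <> j -> ~~ prefix (golomb k i) (golomb k j).
Proof.
move=> k0 i j ne; rewrite /golomb prefix_unary; apply/negP => /andP[/eqP e hp].
move: hp; apply/negP; apply: bcode_pf => //; try by rewrite ltn_mod.
move=> em; apply: ne; by rewrite (divn_eq i k) (divn_eq j k) e em.
Qed.

Lemma size_golomb k i : size (golomb k i) = i %/ k + (size (bcode (i %% k) k)).+1.
Proof. by rewrite /golomb size_cat size_nseq. Qed.

Lemma size_bcode x k : size (bcode x k) =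
  if x < 2 ^ up_log 2 k - k then (up_log 2 k).-1 else up_log 2 k.
Proof. by rewrite /bcode; case: ifP; rewrite size_bin. Qed.

Local Open Scope ring_scope.

Lemma log2p (R : realType) (theta : R) (h0 : 0 < theta) (h1 : theta < 1) (i : nat) :
  log2 (geom_p theta i) = log2 (1 - theta) + i%:R * log2 theta.
Proof.
rewrite /log2 /geom_p lnM ?posrE ?subr_gt0 ?exprn_gt0 // lnXn //.
by rewrite mulrDl mulr_natl mulrnAl.
Qed.

Theorem theorem4 (R : realType) (theta : R) (h0 : 0 < theta) (h1 : theta < 1) :
  let k : nat := `| Num.ceil (- 1 / log2 theta) |%N in
  prefix_code (golomb k) /\
  forall c : nat_code, prefix_code c ->
    (max_pt_red (golomb k) (geom_p theta) <= max_pt_red c (geom_p theta))%E.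
Proof.
move=> k.
have ln2 : 0 < ln (2 : R) by apply: ln_gt0; lra.
have lnt : ln theta < 0 by apply: ln_lt0; rewrite h0 h1.
set a := - log2 theta.
have la : log2 theta = - a by rewrite /a opprK.
have a0 : 0 < a by rewrite /a /log2 -mulNr divr_gt0 // oppr_gt0.
have ex : -1 / log2 theta = a^-1 by rewrite mulN1r -invrN.
have hk : (k%:R : R) = (Num.ceil (a^-1))%:~R.
  have ai : 0 < a^-1 by rewrite invr_gt0.
  by rewrite /k ex natr_absz ger0_norm // ceil_ge0; lra.
clearbody k.
have /andP[hk1 hk2] := ceil_itv (a^-1).
rewrite -hk in hk2; rewrite intrB -hk in hk1.
have hka : 1 <= k%:R * a.
  by have := ler_wpM2r (ltW a0) hk2; rewrite mulVf // gt_eqF.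
have hKa : (k%:R - 1) * a < 1.
  by have := hk1; rewrite -(ltr_pM2r a0) mulVf // gt_eqF.
have k0 : (0 < k)%N.
  rewrite lt0n; apply/eqP => e; move: hka; rewrite e mul0r; lra.
split; first exact: golomb_pf.
move=> c pc.
have kL : (k <= 2 ^ up_log 2 k)%N by apply: up_logP.
have uK : (2 ^ up_log 2 k - k <= k - 1)%N.
  case: (ltnP 1 k) => k1; last first.
    have -> : k = 1%N by apply/eqP; rewrite eqn_leq k1 k0.
    by rewrite up_log1.
  have := up_log_gtn (leqnn 2) k1.
  move: kL (up_log_gt0 2 k); rewrite k1 /=.
  case: (up_log 2 k) => [|L] //= kL _; rewrite expnS; clear; lia.
have [L hL] : exists L, L = up_log 2 k by exists (up_log 2 k).
rewrite -hL in kL uK.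
have [u hu] : exists u, u = (2 ^ L - k)%N by exists (2 ^ L - k)%N.
rewrite -hu in uK.
have [K hK] : exists K, K = (k - 1)%N by exists (k - 1)%N.
rewrite -hK in uK.
have huK : (u + K + 1 = 2 ^ L)%N by clear -kL hu hK k0; lia.
have eK : (K%:R : R) = k%:R - 1 by rewrite hK natrB.
set A := K%:R * a.
have hA : A < 1 by rewrite /A eK.
have A0 : 0 <= A by rewrite /A mulr_ge0 // ltW.
have uA : u%:R * a <= A by rewrite /A; apply: ler_wpM2r; [exact: ltW | rewrite ler_nat].
have hG : forall i, (size (golomb k i))%:R + log2 (geom_p theta i) <=
    (L.+1)%:R + log2 (1 - theta) - u%:R * a.
  move=> i; rewrite log2p // la size_golomb size_bcode -hL -hu.
  have ei : (i%:R : R) = (i %/ k)%:R * k%:R + (i %% k)%:R by rewrite {1}(divn_eq i k) natrD natrM.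
  have ia : (i%:R : R) * a = (i %/ k)%:R * (k%:R * a) + (i %% k)%:R * a by rewrite ei mulrDl mulrA.
  have hq : (i %/ k)%:R <= (i %/ k)%:R * (k%:R * a) :> R by rewrite ler_peMr.
  have xa : 0 <= (i %% k)%:R * a :> R by rewrite mulr_ge0 // ltW.
  case: ltnP => hx.
  - have L0 : (0 < L)%N.
      rewrite lt0n; apply/eqP => L0; move: hu hx; rewrite L0 expn0; clear -k0; lia.
    rewrite natrD (prednK L0) mulrN ia -addn1 !natrD; clear -hq xa uA hA; lra.
  - have ux : u%:R * a <= (i %% k)%:R * a :> R by apply: ler_wpM2r; [exact: ltW | rewrite ler_nat].
    rewrite natrD -addn1 natrD mulrN ia; clear -hq xa ux A0; lra.
have key : (((L.+1)%:R + log2 (1 - theta) - u%:R * a)%:E <= max_pt_red c (geom_p theta))%E.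
  rewrite leNgt; apply/negP => hlt.
  have HH : forall i, (size (c i))%:R < (L.+1)%:R + i%:R * a - u%:R * a :> R.
    move=> i.
    have : (((size (c i))%:R + log2 (geom_p theta i))%:E <= max_pt_red c (geom_p theta))%E.
      by apply: ereal_sup_ubound; exists i.
    move=> /le_lt_trans /(_ hlt); rewrite lte_fin log2p // la.
    clear; lra.
  pose q0 := `|Num.ceil (a / (1 - A))|%N.
  have hq0 : a / (1 - A) <= q0%:R.
    have hp : 0 < a / (1 - A) by rewrite divr_gt0 // subr_gt0.
    rewrite /q0 natr_absz ger0_norm; first exact: ceil_ge.
    by rewrite ceil_ge0; lra.
  have hq0' : a <= q0%:R * (1 - A).
    by rewrite -ler_pdivrMr // subr_gt0.
  apply: (@nocode c pc L u K q0 huK).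
  - move=> q i hi.
    have hi' : i%:R <= u%:R + q%:R * K%:R :> R by rewrite -natrM -natrD ler_nat.
    have hia : i%:R * a <= u%:R * a + q%:R * A :> R.
      rewrite /A mulrA -mulrDl; apply: ler_wpM2r => //; exact: ltW.
    have hqA : q%:R * A <= q%:R :> R by rewrite ler_piMr // ltW.
    have := HH i => hs.
    have : (size (c i))%:R < (L + q).+1%:R :> R.
      rewrite -addn1 !natrD; move: hs hia hqA; clear; rewrite -addn1 natrD; lra.
    by rewrite ltr_nat ltnS.
  - move=> i hi.
    have hi' : i%:R <= u%:R + q0%:R * K%:R + 1 :> R.
      by move: hi; rewrite -(ler_nat R) !natrD natrM.
    have hia : i%:R * a <= u%:R * a + q0%:R * A + a :> R.
      rewrite /A mulrA -[a in _ + a]mul1r -!mulrDl; apply: ler_wpM2r => //; exact: ltW.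
    have := HH i => hs.
    have : (size (c i))%:R < (L + q0).+1%:R :> R.
      rewrite -addn1 !natrD; move: hs hia hq0'; clear; rewrite -addn1 natrD; nra.
    by rewrite ltr_nat ltnS.
apply: ub_ereal_sup => y [i _ <-]; apply: le_trans key; rewrite lee_fin; exact: hG.
Qed.
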